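(* Let $\Omega_1,\Omega_2$ be finite sets and $(\Omega_1^k\times\Omega_2^k,\mu)$ a probability space such that the marginal of $\mu$ on any pair of coordinates, one from the $\Omega_1^k$ part and one from the $\Omega_2^k$ part, is a product distribution. Let $\mu_1,\mu_2$ be the marginals of $\mu$ on $\Omega_1^k$ and $\Omega_2^k$. Let $X,Y$ be random $k\times L$ matrices (entries in $\Omega_1$, resp. $\Omega_2$) chosen so that independently for each $i\in[L]$ the pair of $i$-th columns $(x^i,y^i)\in\Omega_1^k\times\Omega_2^k$ is drawn from $\mu$; let $x_j\in\Omega_1^L$, $y_j\in\Omega_2^L$ denote the $j$-th rows. Let $F:\Omega_1^L\to[-1,1]$ and $G:\Omega_2^L\to[-1,1]$ and set $$\tau:=\sqrt{\sum_{i\in[L]}\mathrm{Inf}_i[F]\,\mathrm{Inf}_i[G]},\qquad \Gamma:=\max\Big\{\sqrt{\textstyle\sum_{i\in[L]}\mathrm{Inf}_i[F]},\ \sqrt{\textstyle\sum_{i\in[L]}\mathrm{Inf}_i[G]}\Big\}.$$ Then $$\Big|\mathbb{E}_{(X,Y)\sim\mu^{\otimes L}}\Big[\prod_{j\in[k]}F(x_j)G(y_j)\Big]-\mathbb{E}_{X\sim\mu_1^{\otimes L}}\Big[\prod_{j\in[k]}F(x_j)\Big]\,\mathbb{E}_{Y\sim\mu_2^{\otimes L}}\Big[\prod_{j\in[k]}G(y_j)\Big]\Big|\le 2^{O(k)}\,\Gamma\,\tau,$$ where the $O(\cdot)$ hides an absolute constant.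
   Context: Influences of $F:\Omega_1^L\to\mathbb{R}$ are taken with respect to the product measure on $\Omega_1^L$ whose coordinate marginals are the single-coordinate marginals of $\mu_1$ (and similarly for $G$ with $\mu_2$): $\mathrm{Inf}_i[F]:=\mathbb{E}_{x_{-i}}\mathrm{Var}_{x_i}[F(x_1,\dots,x_L)]$, equivalently $\sum_{\beta\ni i}\|F_\beta\|_2^2$ for the Efron–Stein decomposition $F=\sum_{\beta\subseteq[L]}F_\beta$. In $X\sim\mu_1^{\otimes L}$ the columns of $X$ are independent samples from $\mu_1$ (and similarly for $Y$). *)

(* Defs.v *)
From HB Require Import structures.
From mathcomp Require Import all_boot all_order all_algebra.
From mathcomp Require Import reals.
Set Implicit Arguments. Unset Strict Implicit. Unset Printing Implicit Defensive.
Import Order.TTheory GRing.Theory Num.Theory.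
Local Open Scope ring_scope.

Section Defs.
Variable R : realType.

Definition is_distr (T : finType) (p : T -> R) :=
  (forall t, 0 <= p t) /\ \sum_t p t = 1.

Variables (k L : nat) (O1 O2 : finType).

(* columns: elements of O1^k, O2^k *)
Notation C1 := {ffun 'I_k -> O1}.
Notation C2 := {ffun 'I_k -> O2}.

Definition marg1 (mu : C1 * C2 -> R) (x : C1) : R := \sum_(y : C2) mu (x, y).
Definition marg2 (mu : C1 * C2 -> R) (y : C2) : R := \sum_(x : C1) mu (x, y).

Definition pairwise_product (mu : C1 * C2 -> R) :=
  forall (a b : 'I_k) (u : O1) (v : O2),
    \sum_(z : C1 * C2 | (z.1 a == u) && (z.2 b == v)) mu z =
    (\sum_(z : C1 * C2 | z.1 a == u) mu z) * (\sum_(z : C1 * C2 | z.2 b == v) mu z).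

Definition coord_marg1 (mu : C1 * C2 -> R) (pi1 : O1 -> R) :=
  forall (a : 'I_k) (u : O1), \sum_(z : C1 * C2 | z.1 a == u) mu z = pi1 u.
Definition coord_marg2 (mu : C1 * C2 -> R) (pi2 : O2 -> R) :=
  forall (b : 'I_k) (v : O2), \sum_(z : C1 * C2 | z.2 b == v) mu z = pi2 v.

Definition row1 (c : {ffun 'I_L -> C1 * C2}) (j : 'I_k) : {ffun 'I_L -> O1} :=
  [ffun i => (c i).1 j].
Definition row2 (c : {ffun 'I_L -> C1 * C2}) (j : 'I_k) : {ffun 'I_L -> O2} :=
  [ffun i => (c i).2 j].
Definition rowX (X : {ffun 'I_L -> C1}) (j : 'I_k) : {ffun 'I_L -> O1} :=
  [ffun i => X i j].
Definition rowY (Y : {ffun 'I_L -> C2}) (j : 'I_k) : {ffun 'I_L -> O2} :=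
  [ffun i => Y i j].

Definition E_joint (mu : C1 * C2 -> R)
    (F : {ffun 'I_L -> O1} -> R) (G : {ffun 'I_L -> O2} -> R) : R :=
  \sum_(c : {ffun 'I_L -> C1 * C2})
     (\prod_(i < L) mu (c i)) * \prod_(j < k) (F (row1 c j) * G (row2 c j)).

Definition E_1 (mu : C1 * C2 -> R) (F : {ffun 'I_L -> O1} -> R) : R :=
  \sum_(X : {ffun 'I_L -> C1})
     (\prod_(i < L) marg1 mu (X i)) * \prod_(j < k) F (rowX X j).
Definition E_2 (mu : C1 * C2 -> R) (G : {ffun 'I_L -> O2} -> R) : R :=
  \sum_(Y : {ffun 'I_L -> C2})
     (\prod_(i < L) marg2 mu (Y i)) * \prod_(j < k) G (rowY Y j).
End Defs.

Section Influence.
Variable R : realType.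
Variables (L : nat) (O : finType).

Definition upd (x : {ffun 'I_L -> O}) (i : 'I_L) (a : O) : {ffun 'I_L -> O} :=
  [ffun j => if j == i then a else x j].

(* Inf_i[F] = E_{x ~ pi^{(x)L}} [ (F x - E_{a ~ pi} F(x with x_i := a))^2 ]
            = E_{x_{-i}} Var_{x_i} F *)
Definition Inf (pi : O -> R) (F : {ffun 'I_L -> O} -> R) (i : 'I_L) : R :=
  \sum_(x : {ffun 'I_L -> O}) (\prod_(l < L) pi (x l)) *
     (F x - \sum_(a : O) pi a * F (upd x i a)) ^+ 2.
End Influence.

(* Main.v *)
Require Import Defs.
From HB Require Import structures.
From mathcomp Require Import all_boot all_order all_algebra.
From mathcomp Require Import reals.
From mathcomp Require Import ring lra.
Import Order.TTheory GRing.Theory Num.Theory.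
Local Open Scope ring_scope.
Set Implicit Arguments. Unset Strict Implicit. Unset Printing Implicit Defensive.
Section CS.
Variable R : realType.

Lemma cs_sq (I : finType) (w a b : I -> R) : (forall i, 0 <= w i) ->
  (\sum_i w i * a i * b i)^+2 <= (\sum_i w i * a i ^+ 2) * (\sum_i w i * b i ^+ 2).
Proof.
move=> w0.
set A := \sum_i w i * a i ^+ 2; set B := \sum_i w i * b i ^+ 2;
  set X := \sum_i w i * a i * b i.
have H : 0 <= \sum_i \sum_j w i * w j * (a i * b j - a j * b i)^+2.
  apply: sumr_ge0 => i _; apply: sumr_ge0 => j _.
  by apply: mulr_ge0; [apply: mulr_ge0|apply: sqr_ge0].
have E1 : \sum_i \sum_j w i * w j * (a i * b j - a j * b i)^+2 =
  \sum_i \sum_j (w i * a i ^+ 2 * (w j * b j ^+ 2)) +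
  \sum_i \sum_j (w j * a j ^+ 2 * (w i * b i ^+ 2)) -
  2 * \sum_i \sum_j (w i * a i * b i * (w j * a j * b j)).
  rewrite mulr_sumr -big_split -sumrB /=; apply: eq_bigr => i _.
  rewrite mulr_sumr -big_split -sumrB /=; apply: eq_bigr => j _; ring.
have E2 : \sum_i \sum_j (w j * a j ^+ 2 * (w i * b i ^+ 2)) = A * B.
  rewrite exchange_big /= /A /B mulr_suml; apply: eq_bigr => i _; rewrite mulr_sumr //.
have E3 : \sum_i \sum_j (w i * a i ^+ 2 * (w j * b j ^+ 2)) = A * B.
  rewrite /A /B mulr_suml; apply: eq_bigr => i _; rewrite mulr_sumr //.
have E4 : \sum_i \sum_j (w i * a i * b i * (w j * a j * b j)) = X ^+ 2.
  rewrite expr2 /X mulr_suml; apply: eq_bigr => i _; rewrite mulr_sumr //.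
rewrite E1 E2 E3 E4 in H; lra.
Qed.

Lemma cs_sqrt (I : finType) (w a b : I -> R) : (forall i, 0 <= w i) ->
  \sum_i w i * a i * b i <= Num.sqrt (\sum_i w i * a i ^+ 2) * Num.sqrt (\sum_i w i * b i ^+ 2).
Proof.
move=> w0.
have A0 : 0 <= \sum_i w i * a i ^+ 2 by apply: sumr_ge0 => i _; apply: mulr_ge0 => //; apply: sqr_ge0.
rewrite -sqrtrM //.
apply: le_trans (ler_norm _) _.
rewrite -sqrtr_sqr; apply: ler_wsqrtr; exact: cs_sq.
Qed.
End CS.
Section Prods.
Variables (R : realType) (I : Type) (m d : I -> R).
Hypothesis hm : forall i, `|m i| <= 1.
Hypothesis hf : forall i, `|m i + d i| <= 1.

Fixpoint linp (s : seq I) : R :=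
  if s is j :: s' then d j * \prod_(i <- s') m i + m j * linp s' else 0.

Lemma nmul1 (x y : R) : `|x| <= 1 -> `|y| <= 1 -> `|x * y| <= 1.
Proof. move=> hx hy; rewrite normrM; have := normr_ge0 x; have := normr_ge0 y; nra. Qed.

Lemma prodm_le1 s : `|\prod_(i <- s) m i| <= 1.
Proof. elim: s => [|j s IH]; first by rewrite big_nil normr1. by rewrite big_cons nmul1. Qed.

Lemma prodf_le1 s : `|\prod_(i <- s) (m i + d i)| <= 1.
Proof. elim: s => [|j s IH]; first by rewrite big_nil normr1. by rewrite big_cons nmul1. Qed.

Lemma sumd_ge0 s : 0 <= \sum_(i <- s) `|d i|.
Proof. by apply: sumr_ge0 => i _. Qed.

Lemma L1 s : `|\prod_(i <- s) (m i + d i) - \prod_(i <- s) m i| <= \sum_(i <- s) `|d i|.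
Proof.
elim: s => [|j s IH]; first by rewrite !big_nil subrr normr0.
rewrite !big_cons.
set A := \prod_(i <- s) (m i + d i); set B := \prod_(i <- s) m i.
have -> : (m j + d j) * A - m j * B = m j * (A - B) + d j * A by ring.
apply: le_trans (ler_normD _ _) _; rewrite !normrM.
have := prodf_le1 s; rewrite -/A => hA.
have := hm j; have := normr_ge0 (m j); have := normr_ge0 (d j); have := normr_ge0 A;
have := normr_ge0 (A - B); nra.
Qed.

Lemma L3 s : `|linp s| <= \sum_(i <- s) `|d i|.
Proof.
elim: s => [|j s IH]; first by rewrite big_nil normr0.
rewrite big_cons /=.
apply: le_trans (ler_normD _ _) _; rewrite !normrM.
have := prodm_le1 s; set B := \prod_(i <- s) m i => hB.
have := hm j; have := normr_ge0 (m j); have := normr_ge0 (d j); have := normr_ge0 B;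
have := normr_ge0 (linp s); nra.
Qed.

Lemma L2 s : `|\prod_(i <- s) (m i + d i) - \prod_(i <- s) m i - linp s|
   <= (\sum_(i <- s) `|d i|) ^+ 2.
Proof.
elim: s => [|j s IH]; first by rewrite !big_nil /= subrr subr0 normr0 expr2 mulr0.
rewrite !big_cons /=.
set A := \prod_(i <- s) (m i + d i); set B := \prod_(i <- s) m i.
set S := \sum_(i <- s) `|d i|.
have -> : (m j + d j) * A - m j * B - (d j * B + m j * linp s) =
   m j * (A - B - linp s) + d j * (A - B) by ring.
apply: le_trans (ler_normD _ _) _; rewrite !normrM.
have := L1 s; rewrite -/A -/B -/S => h1.
have := sumd_ge0 s; rewrite -/S => hS.
have h2 : `|m j| * `|A - B - linp s| <= S ^+ 2.
  apply: le_trans IH; rewrite ler_piMl //; exact: hm.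
have h3 : `|d j| * `|A - B| <= `|d j| * S by rewrite ler_wpM2l.
have := normr_ge0 (d j); nra.
Qed.
End Prods.
Lemma GH (R : realType) (T A B : finType) (nu : T -> R) (h1 : T -> A) (h2 : T -> B)
  (phi : A -> R) (psi : B -> R) :
  \sum_t nu t * (phi (h1 t) * psi (h2 t)) =
  \sum_a \sum_b phi a * psi b * \sum_(t | (h1 t == a) && (h2 t == b)) nu t.
Proof.
have -> : \sum_a \sum_b phi a * psi b * \sum_(t | (h1 t == a) && (h2 t == b)) nu t
  = \sum_a \sum_b \sum_t (if (h1 t == a) && (h2 t == b) then nu t * (phi (h1 t) * psi (h2 t)) else 0).
  apply: eq_bigr => a _; apply: eq_bigr => b _.
  rewrite big_mkcond mulr_sumr; apply: eq_bigr => t _.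
  case: (h1 t =P a) => [<-|] //=; case: (h2 t =P b) => [<-|] //=; rewrite ?mulr0 //; ring.
rewrite (eq_bigr (fun a => \sum_t \sum_b (if (h1 t == a) && (h2 t == b) then nu t * (phi (h1 t) * psi (h2 t)) else 0))); last by move=> a _; rewrite exchange_big.
rewrite exchange_big /=; apply: eq_bigr => t _.
rewrite pair_bigA /= -big_mkcond /= (big_pred1 (h1 t, h2 t)) //.
by move=> [a b] /=; rewrite xpair_eqE (eq_sym a) (eq_sym b).
Qed.
Section Column.
Variables (R : realType) (k : nat) (O1 O2 : finType) (pi1 : O1 -> R) (pi2 : O2 -> R).
Notation C1 := {ffun 'I_k -> O1}.
Notation C2 := {ffun 'I_k -> O2}.
Notation W := (C1 * C2)%type.

Definition goodc (nu : W -> R) := (forall w, 0 <= nu w) /\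
  forall a b u v, \sum_(w : W | (w.1 a == u) && (w.2 b == v)) nu w = pi1 u * pi2 v.

Lemma good_prod nu a b (phi : O1 -> R) (psi : O2 -> R) : goodc nu ->
  \sum_(w : W) nu w * (phi (w.1 a) * psi (w.2 b)) =
  (\sum_u pi1 u * phi u) * (\sum_v pi2 v * psi v).
Proof.
move=> [_ hg]; rewrite (GH nu (fun w : W => w.1 a) (fun w : W => w.2 b)) mulr_suml.
apply: eq_bigr => u _; rewrite mulr_sumr; apply: eq_bigr => v _; rewrite hg; ring.
Qed.

Lemma sum_lin (T : finType) (nu x y : T -> R) (c c' : R) :
  \sum_t nu t * (c * x t + c' * y t) =
  c * \sum_t nu t * x t + c' * \sum_t nu t * y t.
Proof.
rewrite !mulr_sumr -big_split; apply: eq_bigr => t _ /=; ring.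
Qed.

Lemma lin_orth nu (mf : 'I_k -> R) (df : 'I_k -> O1 -> R) (mg : 'I_k -> R)
  (dg : 'I_k -> O2 -> R) (s1 s2 : seq 'I_k) : goodc nu ->
  (forall j, \sum_u pi1 u * df j u = 0) -> (forall j, \sum_v pi2 v * dg j v = 0) ->
  \sum_w nu w * (linp mf (fun j => df j (w.1 j)) s1 * linp mg (fun j => dg j (w.2 j)) s2) = 0.
Proof.
move=> hnu h1 h2.
have base : forall j, \sum_w nu w * (df j (w.1 j) * linp mg (fun j => dg j (w.2 j)) s2) = 0.
  move=> j; elim: s2 => [|b s2 IH] /=.
    by apply: big1 => w _; rewrite mulr0 mulr0.
  rewrite (eq_bigr (fun w => nu w * ((\prod_(i <- s2) mg i) * (df j (w.1 j) * dg b (w.2 b))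
      + mg b * (df j (w.1 j) * linp mg (fun j => dg j (w.2 j)) s2)))); last first.
    by move=> w _; congr (_ * _); ring.
  by rewrite sum_lin IH good_prod // h1 !mul0r !mulr0 addr0.
elim: s1 => [|a s1 IH] /=.
  by apply: big1 => w _; rewrite mul0r mulr0.
rewrite (eq_bigr (fun w => nu w * ((\prod_(i <- s1) mf i) * (df a (w.1 a) * linp mg (fun j => dg j (w.2 j)) s2)
      + mf a * (linp mf (fun j => df j (w.1 j)) s1 * linp mg (fun j => dg j (w.2 j)) s2)))); last first.
  by move=> w _; congr (_ * _); ring.
by rewrite sum_lin IH base !mulr0 addr0.
Qed.
End Column.
Section CL.
Variables (R : realType) (k : nat) (O1 O2 : finType) (pi1 : O1 -> R) (pi2 : O2 -> R).
Notation C1 := {ffun 'I_k -> O1}.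
Notation C2 := {ffun 'I_k -> O2}.
Notation W := (C1 * C2)%type.
Variables (f : 'I_k -> O1 -> R) (g : 'I_k -> O2 -> R).
Hypotheses (hp1 : is_distr pi1) (hp2 : is_distr pi2).
Hypotheses (hf : forall j u, `|f j u| <= 1) (hg : forall j v, `|g j v| <= 1).

Lemma mean_le1 (T : finType) (pi : T -> R) (h : T -> R) : is_distr pi ->
  (forall t, `|h t| <= 1) -> `|\sum_t pi t * h t| <= 1.
Proof.
move=> [p0 p1] hh; apply: le_trans (ler_norm_sum _ _ _) _.
rewrite -p1; apply: ler_sum => t _; rewrite normrM ger0_norm //.
by rewrite ler_piMr.
Qed.

Lemma mean0 (T : finType) (pi : T -> R) (h : T -> R) : is_distr pi ->
  \sum_t pi t * (h t - \sum_s pi s * h s) = 0.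
Proof.
move=> [p0 p1]; rewrite (eq_bigr (fun t => pi t * h t - (\sum_s pi s * h s) * pi t)).
  by rewrite sumrB -mulr_sumr p1 mulr1 subrr.
by move=> t _; ring.
Qed.

Definition mf j := \sum_u pi1 u * f j u.
Definition mg j := \sum_v pi2 v * g j v.
Definition df j u := f j u - mf j.
Definition dg j v := g j v - mg j.
Definition Pf (w : W) := \prod_(j < k) f j (w.1 j).
Definition Qg (w : W) := \prod_(j < k) g j (w.2 j).
Definition Mf := \prod_(j < k) mf j.
Definition Ng := \prod_(j < k) mg j.
Definition P1 (w : W) := linp mf (fun j => df j (w.1 j)) (index_enum 'I_k).
Definition Q1 (w : W) := linp mg (fun j => dg j (w.2 j)) (index_enum 'I_k).
Definition Rw w := Pf w * Qg w - P1 w * Q1 w - Pf w * Ng - Mf * Qg w + Mf * Ng.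
Definition SD (w : W) := \sum_(j < k) `|df j (w.1 j)|.
Definition SE (w : W) := \sum_(j < k) `|dg j (w.2 j)|.
Definition Sw w := SD w * SE w * (SD w + SE w).

Lemma mf_le1 j : `|mf j| <= 1. Proof. exact: mean_le1. Qed.
Lemma mg_le1 j : `|mg j| <= 1. Proof. exact: mean_le1. Qed.

Lemma Pf_eq w : Pf w = \prod_(j < k) (mf j + df j (w.1 j)).
Proof. by apply: eq_bigr => j _; rewrite /df addrC subrK. Qed.
Lemma Qg_eq w : Qg w = \prod_(j < k) (mg j + dg j (w.2 j)).
Proof. by apply: eq_bigr => j _; rewrite /dg addrC subrK. Qed.

Lemma Rbound w : `|Rw w| <= Sw w.
Proof.
have hm1 : forall j, `|mf j| <= 1 := mf_le1.
have hm2 : forall j, `|mg j| <= 1 := mg_le1.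
have hf1 : forall j, `|mf j + df j (w.1 j)| <= 1 by move=> j; rewrite /df addrC subrK.
have hg1 : forall j, `|mg j + dg j (w.2 j)| <= 1 by move=> j; rewrite /dg addrC subrK.
have -> : Rw w = (Pf w - Mf) * (Qg w - Ng - Q1 w) + (Pf w - Mf - P1 w) * Q1 w.
  rewrite /Rw; ring.
apply: le_trans (ler_normD _ _) _; rewrite !normrM.
have a1 : `|Pf w - Mf| <= SD w by rewrite Pf_eq; exact: (L1 hm1 hf1).
have a2 : `|Qg w - Ng - Q1 w| <= SE w ^+ 2 by rewrite Qg_eq; exact: (L2 hm2 hg1).
have a3 : `|Pf w - Mf - P1 w| <= SD w ^+ 2 by rewrite Pf_eq; exact: (L2 hm1 hf1).
have a4 : `|Q1 w| <= SE w by exact: (L3 (fun j => dg j (w.2 j)) hm2).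
have s1 : 0 <= SD w by apply: sumr_ge0.
have s2 : 0 <= SE w by apply: sumr_ge0.
have := normr_ge0 (Pf w - Mf); have := normr_ge0 (Q1 w);
have := normr_ge0 (Qg w - Ng - Q1 w); have := normr_ge0 (Pf w - Mf - P1 w).
rewrite /Sw; nra.
Qed.

Lemma key_decomp nu : goodc pi1 pi2 nu ->
  \sum_w nu w * (Pf w * Qg w) - \sum_w nu w * Rw w =
  Ng * \sum_w nu w * Pf w + Mf * \sum_w nu w * Qg w - Mf * Ng * \sum_(w : W) nu w * 1.
Proof.
move=> hnu.
have o : \sum_w nu w * (P1 w * Q1 w) = 0.
  rewrite /P1 /Q1; apply: (@lin_orth _ _ _ _ pi1 pi2 nu mf df mg dg) => // j.
    by rewrite /df; exact: mean0.
  by rewrite /dg; exact: mean0.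
rewrite -sumrB (eq_bigr (fun w => nu w * (P1 w * Q1 w) +
   (Ng * (nu w * Pf w) + (Mf * (nu w * Qg w) - Mf * Ng * (nu w * 1))))); last first.
  by move=> w _; rewrite /Rw; ring.
rewrite !big_split /= sumrN -!mulr_sumr o add0r; ring.
Qed.

Lemma CL nu nu' : goodc pi1 pi2 nu -> goodc pi1 pi2 nu' ->
  (forall phi : C1 -> R, \sum_w nu w * phi w.1 = \sum_w nu' w * phi w.1) ->
  (forall phi : C2 -> R, \sum_w nu w * phi w.2 = \sum_w nu' w * phi w.2) ->
  `|\sum_w (nu w - nu' w) * \prod_(j < k) (f j (w.1 j) * g j (w.2 j))|
    <= \sum_w (nu w + nu' w) * Sw w.
Proof.
move=> hn hn' m1 m2.
have e : \sum_w (nu w - nu' w) * \prod_(j < k) (f j (w.1 j) * g j (w.2 j)) =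
  \sum_w nu w * Rw w - \sum_w nu' w * Rw w.
  rewrite (eq_bigr (fun w => nu w * (Pf w * Qg w) - nu' w * (Pf w * Qg w))); last first.
    by move=> w _; rewrite big_split /= /Pf /Qg; ring.
  rewrite sumrB.
  have h1 := key_decomp hn; have h2 := key_decomp hn'.
  have e1 : \sum_w nu w * Pf w = \sum_w nu' w * Pf w.
    exact: (m1 (fun x => \prod_(j < k) f j (x j))).
  have e2 : \sum_w nu w * Qg w = \sum_w nu' w * Qg w.
    exact: (m2 (fun x => \prod_(j < k) g j (x j))).
  have e3 : \sum_(w : W) nu w * 1 = \sum_w nu' w * 1.
    exact: (m1 (fun _ => 1)).
  move: h1 h2; rewrite e1 e2 e3; set A := Ng * _ + _ - _ => h1 h2; lra.
rewrite e -sumrB; apply: le_trans (ler_norm_sum _ _ _) _.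
apply: ler_sum => w _.
have := Rbound w; have := normr_ge0 (Rw w).
case: hn => [p _]; case: hn' => [p' _]; have := p w; have := p' w.
rewrite -mulrBl normrM.
have : `|nu w - nu' w| <= nu w + nu' w.
  apply: le_trans (ler_normB _ _) _; rewrite !ger0_norm //.
have := normr_ge0 (nu w - nu' w); nra.
Qed.
End CL.
Section Global.
Variables (R : realType) (k L : nat) (O1 O2 : finType).
Notation C1 := {ffun 'I_k -> O1}.
Notation C2 := {ffun 'I_k -> O2}.
Notation W := (C1 * C2)%type.
Notation Cfg := {ffun 'I_L -> W}.
Implicit Types (c : Cfg) (t : 'I_L) (w : W) (nu : 'I_L -> W -> R).

Definition updc (c : Cfg) (t : 'I_L) (w : W) : Cfg := [ffun i => if i == t then w else c i].
Definition Exp (nu : 'I_L -> W -> R) (K : Cfg -> R) := \sum_(c : Cfg) (\prod_i nu i (c i)) * K c.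

Lemma updc_at c t w : updc c t w t = w.
Proof. by rewrite ffunE eqxx. Qed.
Lemma updc_ne c t w i : i != t -> updc c t w i = c i.
Proof. by rewrite ffunE => /negbTE ->. Qed.
Lemma updc_updc c t w w' : updc (updc c t w) t w' = updc c t w'.
Proof. by apply/ffunP => i; rewrite !ffunE; case: eqP. Qed.
Lemma updc_id c t w : c t = w -> updc c t w = c.
Proof. by move=> <-; apply/ffunP => i; rewrite !ffunE; case: eqP => // ->. Qed.

Lemma split_exp nu t w0 K : Exp nu K =
  \sum_(c : Cfg | c t == w0) (\prod_(i | i != t) nu i (c i)) * \sum_w nu t w * K (updc c t w).
Proof.
pose g (c : Cfg) := (\prod_i nu i (c i)) * K c.
have e1 : forall c w, (\prod_(i | i != t) nu i (c i)) * (nu t w * K (updc c t w)) = g (updc c t w).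
  move=> c w; rewrite /g [in RHS](bigD1 t) //= updc_at.
  rewrite [in RHS](eq_bigr (fun i => nu i (c i))); first by ring.
  by move=> i hi; rewrite updc_ne.
rewrite (eq_bigr (fun c => \sum_w g (updc c t w))); last first.
  by move=> c _; rewrite mulr_sumr; apply: eq_bigr => w _; rewrite e1.
rewrite exchange_big /= /Exp (partition_big (fun c : Cfg => c t) xpredT) //=.
apply: eq_bigr => w _.
rewrite (reindex_onto (fun c => updc c t w) (fun c => updc c t w0)); last first.
  by move=> c /eqP hc; rewrite updc_updc updc_id.
apply: eq_bigl => c; rewrite updc_at eqxx /= updc_updc.
apply/eqP/eqP => [<-|h]; first by rewrite updc_at.
exact: updc_id.
Qed.

Definition rho (nu : 'I_L -> W -> R) t c : R := \prod_(i | i != t) nu i (c i).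

Lemma step_diff nu nu' t w0 K : (forall i, i != t -> nu i = nu' i) ->
  Exp nu K - Exp nu' K =
  \sum_(c : Cfg | c t == w0) rho nu t c * \sum_w (nu t w - nu' t w) * K (updc c t w).
Proof.
move=> h; rewrite !(split_exp _ t w0) -sumrB; apply: eq_bigr => c _.
rewrite /rho (eq_bigr (fun i => nu' i (c i))); last by move=> i /h ->.
by rewrite -mulrBr -sumrB; congr (_ * _); apply: eq_bigr => w _; rewrite mulrBl.
Qed.

Lemma step_sum nu nu' t w0 K : (forall i, i != t -> nu i = nu' i) ->
  Exp nu K + Exp nu' K =
  \sum_(c : Cfg | c t == w0) rho nu t c * \sum_w (nu t w + nu' t w) * K (updc c t w).
Proof.
move=> h; rewrite !(split_exp _ t w0) -big_split; apply: eq_bigr => c _.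
rewrite /rho (eq_bigr (fun i => nu' i (c i))); last by move=> i /h ->.
by rewrite /= -mulrDr -big_split; congr (_ * _); apply: eq_bigr => w _; rewrite mulrDl.
Qed.

Lemma prod_ind (I : finType) (P : pred I) :
  \prod_i ((P i)%:R : R) = ([forall i, P i])%:R.
Proof.
case: (boolP [forall i, P i]) => [/forallP H | ].
  by rewrite big1 // => i _; rewrite H.
rewrite negb_forall => /existsP [i Hi]; rewrite (bigD1 i) //= (negbTE Hi) mul0r //.
Qed.

Variables (pi1 : O1 -> R) (pi2 : O2 -> R).
Hypotheses (hp1 : is_distr pi1) (hp2 : is_distr pi2).

Lemma RI nu a b (phi : {ffun 'I_L -> O1} -> R) (psi : {ffun 'I_L -> O2} -> R) :
  (forall i, goodc pi1 pi2 (nu i)) ->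
  Exp nu (fun c => phi (Defs.row1 c a) * psi (Defs.row2 c b)) =
  (\sum_(x : {ffun 'I_L -> O1}) (\prod_l pi1 (x l)) * phi x) * (\sum_(y : {ffun 'I_L -> O2}) (\prod_l pi2 (y l)) * psi y).
Proof.
move=> hg; rewrite /Exp (GH (fun c : Cfg => \prod_i nu i (c i)) (fun c : Cfg => Defs.row1 c a) (fun c : Cfg => Defs.row2 c b)).
rewrite mulr_suml; apply: eq_bigr => x _; rewrite mulr_sumr; apply: eq_bigr => y _.
have -> : \sum_(c : Cfg | (Defs.row1 c a == x) && (Defs.row2 c b == y)) \prod_i nu i (c i) =
   \prod_i (pi1 (x i) * pi2 (y i)).
  rewrite big_mkcond /=.
  rewrite (eq_bigr (fun c : Cfg => \prod_i (nu i (c i) * ((((c i).1 a == x i) && ((c i).2 b == y i)))%:R))); last first.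
    move=> c _; rewrite big_split /= prod_ind.
    have -> : [forall i, ((c i).1 a == x i) && ((c i).2 b == y i)] =
       (Defs.row1 c a == x) && (Defs.row2 c b == y).
      apply/forallP/andP => [H|[/eqP <- /eqP <-] i]; last by rewrite !ffunE !eqxx.
      by split; apply/eqP/ffunP => i; rewrite ffunE; case/andP: (H i) => /eqP h1 /eqP h2; rewrite ?h1 ?h2.
    by case: ifP; rewrite ?mulr1 ?mulr0.
  rewrite -(bigA_distr_bigA (fun (i : 'I_L) (w : W) => nu i w * (((w.1 a == x i) && (w.2 b == y i)))%:R)) /=; apply: eq_bigr => i _.
  case: (hg i) => _ hgi; rewrite -(hgi a b) [RHS]big_mkcond /=; apply: eq_bigr => w _.
  by case: ifP; rewrite ?mulr1 ?mulr0.
rewrite big_split /=; ring.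
Qed.


Lemma row1_updc c t w j : Defs.row1 (updc c t w) j = upd (Defs.row1 c j) t (w.1 j).
Proof. by apply/ffunP => i; rewrite !ffunE; case: eqP. Qed.
Lemma row2_updc c t w j : Defs.row2 (updc c t w) j = upd (Defs.row2 c j) t (w.2 j).
Proof. by apply/ffunP => i; rewrite !ffunE; case: eqP. Qed.
Lemma upd_upd (O : finType) (x : {ffun 'I_L -> O}) t a b : upd (upd x t a) t b = upd x t b.
Proof. by apply/ffunP => i; rewrite !ffunE; case: eqP. Qed.

Variables (F : {ffun 'I_L -> O1} -> R) (G : {ffun 'I_L -> O2} -> R).
Hypotheses (hF : forall x, `|F x| <= 1) (hG : forall y, `|G y| <= 1).

Definition dF t c j := F (Defs.row1 c j) - \sum_u pi1 u * F (upd (Defs.row1 c j) t u).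
Definition dG t c j := G (Defs.row2 c j) - \sum_v pi2 v * G (upd (Defs.row2 c j) t v).
Definition SDt t c := \sum_(j < k) `|dF t c j|.
Definition SEt t c := \sum_(j < k) `|dG t c j|.
Definition St t c := SDt t c * SEt t c * (SDt t c + SEt t c).
Definition Hc c := \prod_(j < k) (F (Defs.row1 c j) * G (Defs.row2 c j)).

Lemma St_ge0 t c : 0 <= St t c.
Proof.
have h1 : 0 <= SDt t c by apply: sumr_ge0.
have h2 : 0 <= SEt t c by apply: sumr_ge0.
by rewrite /St; apply: mulr_ge0; [apply: mulr_ge0|apply: addr_ge0].
Qed.

Lemma step nu nu' t w0 : (forall i, i != t -> nu i = nu' i) ->
  (forall i w, 0 <= nu i w) ->
  goodc pi1 pi2 (nu t) -> goodc pi1 pi2 (nu' t) ->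
  (forall phi : C1 -> R, \sum_w nu t w * phi w.1 = \sum_w nu' t w * phi w.1) ->
  (forall phi : C2 -> R, \sum_w nu t w * phi w.2 = \sum_w nu' t w * phi w.2) ->
  `|Exp nu Hc - Exp nu' Hc| <= Exp nu (St t) + Exp nu' (St t).
Proof.
move=> he hpos g1 g2 m1 m2.
rewrite (step_diff w0 _ he) (step_sum w0 _ he).
apply: le_trans (ler_norm_sum _ _ _) _; apply: ler_sum => c _.
have r0 : 0 <= rho nu t c by apply: prodr_ge0 => i _.
rewrite normrM ger0_norm //; apply: ler_wpM2l => //.
pose f j u := F (upd (Defs.row1 c j) t u).
pose g j v := G (upd (Defs.row2 c j) t v).
have hf : forall j u, `|f j u| <= 1 by move=> j u; apply: hF.
have hg : forall j v, `|g j v| <= 1 by move=> j v; apply: hG.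
have := CL hp1 hp2 hf hg g1 g2 m1 m2.
have -> : \sum_w (nu t w - nu' t w) * \prod_(j < k) (f j (w.1 j) * g j (w.2 j)) =
   \sum_w (nu t w - nu' t w) * Hc (updc c t w).
  apply: eq_bigr => w _; congr (_ * _); apply: eq_bigr => j _.
  by rewrite row1_updc row2_updc.
move/le_trans; apply; apply: ler_sum => w _; apply: ler_wpM2l.
  by case: g1 => p _; case: g2 => p' _; apply: addr_ge0.
rewrite le_eqVlt; apply/orP; left; apply/eqP.
rewrite /Sw /St /SDt /SEt /SD /SE /df /dg /mf /mg /dF /dG.
by congr (_ * _ * (_ + _)); [|  | |]; apply: eq_bigr => j _;
  rewrite ?row1_updc ?row2_updc; under [in RHS]eq_bigr do rewrite upd_upd.
Qed.


Lemma Exp_le nu X Y : (forall i w, 0 <= nu i w) -> (forall c, X c <= Y c) ->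
  Exp nu X <= Exp nu Y.
Proof.
move=> h hxy; apply: ler_sum => c _; apply: ler_wpM2l => //.
by apply: prodr_ge0 => i _.
Qed.

Lemma Exp_sum (I : finType) nu (X : I -> Cfg -> R) :
  Exp nu (fun c => \sum_i X i c) = \sum_i Exp nu (X i).
Proof.
rewrite /Exp exchange_big /=; apply: eq_bigr => c _; by rewrite mulr_sumr.
Qed.

Lemma Exp_scale nu a X : Exp nu (fun c => a * X c) = a * Exp nu X.
Proof. rewrite /Exp mulr_sumr; apply: eq_bigr => c _; ring. Qed.

Lemma Exp_add nu X Y : Exp nu (fun c => X c + Y c) = Exp nu X + Exp nu Y.
Proof. rewrite /Exp -big_split; apply: eq_bigr => c _ /=; ring. Qed.

Lemma sum_prod_distr (O : finType) (pi : O -> R) : is_distr pi ->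
  \sum_(y : {ffun 'I_L -> O}) \prod_l pi (y l) = 1.
Proof.
move=> [_ h]; rewrite -(bigA_distr_bigA (fun (l : 'I_L) (v : O) => pi v)) /=.
by rewrite big1 // => l _.
Qed.

Lemma Inf_ge0 (O : finType) (pi : O -> R) (H : {ffun 'I_L -> O} -> R) t :
  is_distr pi -> 0 <= Inf pi H t.
Proof.
move=> [p0 _]; apply: sumr_ge0 => x _; apply: mulr_ge0; last exact: sqr_ge0.
by apply: prodr_ge0.
Qed.

Lemma sq_sum_le (x : 'I_k -> R) :
  (\sum_(j < k) `|x j|) ^+ 2 <= k%:R * \sum_(j < k) x j ^+ 2.
Proof.
have := @cs_sq _ _ (fun _ : 'I_k => 1) (fun _ => 1) (fun j => `|x j|) (fun _ => ler01).
rewrite (eq_bigr (fun j => `|x j|)); last by move=> j _; rewrite !mul1r.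
move=> H; apply: le_trans H _; rewrite le_eqVlt; apply/orP; left; apply/eqP.
congr (_ * _).
  rewrite (eq_bigr (fun _ => (1 : R))); last by move=> j _; rewrite expr1n mulr1.
  by rewrite sumr_const card_ord.
by apply: eq_bigr => j _; rewrite mul1r real_normK // num_real.
Qed.

Lemma ExpF2 nu t a : (forall i, goodc pi1 pi2 (nu i)) ->
  Exp nu (fun c => dF t c a ^+ 2) = Inf pi1 F t.
Proof.
move=> hg.
have := RI a a (fun x => (F x - \sum_u pi1 u * F (upd x t u)) ^+ 2) (fun _ => 1) hg.
rewrite (eq_bigr (fun y : {ffun 'I_L -> O2} => \prod_l pi2 (y l))); last by move=> y _; rewrite mulr1.
rewrite sum_prod_distr // mulr1 => H; rewrite /Inf -H.
by apply: eq_bigr => c _; rewrite mulr1.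
Qed.

Lemma ExpG2 nu t b : (forall i, goodc pi1 pi2 (nu i)) ->
  Exp nu (fun c => dG t c b ^+ 2) = Inf pi2 G t.
Proof.
move=> hg.
have := RI b b (fun _ => 1) (fun y => (G y - \sum_v pi2 v * G (upd y t v)) ^+ 2) hg.
rewrite (eq_bigr (fun x : {ffun 'I_L -> O1} => \prod_l pi1 (x l))); last by move=> x _; rewrite mulr1.
rewrite sum_prod_distr // mul1r => H; rewrite /Inf -H.
by apply: eq_bigr => c _; rewrite mul1r.
Qed.

Lemma ExpFG nu t a b : (forall i, goodc pi1 pi2 (nu i)) ->
  Exp nu (fun c => dF t c a ^+ 2 * dG t c b ^+ 2) = Inf pi1 F t * Inf pi2 G t.
Proof.
move=> hg.
exact: (RI a b (fun x => (F x - \sum_u pi1 u * F (upd x t u)) ^+ 2)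
   (fun y => (G y - \sum_v pi2 v * G (upd y t v)) ^+ 2) hg).
Qed.


Lemma good_pos nu : (forall i, goodc pi1 pi2 (nu i)) -> forall i w, 0 <= nu i w.
Proof. by move=> h i w; case: (h i) => p _; apply: p. Qed.

Lemma Exp_St nu t : (forall i, goodc pi1 pi2 (nu i)) ->
  Exp nu (St t) <= Num.sqrt (k%:R ^+ 4 * (Inf pi1 F t * Inf pi2 G t)) *
                   Num.sqrt (2 * k%:R ^+ 2 * (Inf pi1 F t + Inf pi2 G t)).
Proof.
move=> hg; have hpos := good_pos hg.
have w0 : forall c : Cfg, 0 <= \prod_i nu i (c i) by move=> c; apply: prodr_ge0.
have cs := @cs_sqrt _ _ (fun c : Cfg => \prod_i nu i (c i))
   (fun c => SDt t c * SEt t c) (fun c => SDt t c + SEt t c) w0.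
have -> : Exp nu (St t) = \sum_(c : Cfg) (\prod_i nu i (c i)) * (SDt t c * SEt t c) * (SDt t c + SEt t c).
  by apply: eq_bigr => c _; rewrite /St mulrA.
apply: le_trans cs _.
have k0 : 0 <= (k%:R : R) by rewrite ler0n.
have sd0 : forall c, 0 <= SDt t c by move=> c; apply: sumr_ge0.
have se0 : forall c, 0 <= SEt t c by move=> c; apply: sumr_ge0.
have qF : forall c, SDt t c ^+ 2 <= k%:R * \sum_(a < k) dF t c a ^+ 2 by move=> c; apply: sq_sum_le.
have qG : forall c, SEt t c ^+ 2 <= k%:R * \sum_(b < k) dG t c b ^+ 2 by move=> c; apply: sq_sum_le.
apply: ler_pM; try exact: sqrtr_ge0; apply: ler_wsqrtr.
- have -> : k%:R ^+ 4 * (Inf pi1 F t * Inf pi2 G t) =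
     Exp nu (fun c => k%:R ^+ 2 * \sum_(a < k) \sum_(b < k) (dF t c a ^+ 2 * dG t c b ^+ 2)).
    rewrite Exp_scale Exp_sum.
    rewrite (eq_bigr (fun _ => k%:R * (Inf pi1 F t * Inf pi2 G t))); last first.
      move=> a _; rewrite Exp_sum (eq_bigr (fun _ => Inf pi1 F t * Inf pi2 G t)).
        by rewrite sumr_const card_ord mulr_natl.
      by move=> b _; rewrite ExpFG.
    by rewrite sumr_const card_ord -mulr_natl; ring.
  apply: ler_sum => c _; apply: ler_wpM2l => //.
  have -> : \sum_(a < k) \sum_(b < k) (dF t c a ^+ 2 * dG t c b ^+ 2) =
     (\sum_(a < k) dF t c a ^+ 2) * (\sum_(b < k) dG t c b ^+ 2).
    by rewrite mulr_suml; apply: eq_bigr => a _; rewrite mulr_sumr.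
  rewrite exprMn.
  apply: le_trans (ler_pM (sqr_ge0 _) (sqr_ge0 _) (qF c) (qG c)) _.
  by rewrite le_eqVlt; apply/orP; left; apply/eqP; ring.
- have -> : 2 * k%:R ^+ 2 * (Inf pi1 F t + Inf pi2 G t) =
     Exp nu (fun c => 2 * k%:R * \sum_(a < k) dF t c a ^+ 2 + 2 * k%:R * \sum_(b < k) dG t c b ^+ 2).
    have s1 : Exp nu (fun c => \sum_(a < k) dF t c a ^+ 2) = k%:R * Inf pi1 F t.
      rewrite Exp_sum (eq_bigr (fun _ => Inf pi1 F t)); last by move=> a _; exact: ExpF2.
      by rewrite sumr_const card_ord mulr_natl.
    have s2 : Exp nu (fun c => \sum_(b < k) dG t c b ^+ 2) = k%:R * Inf pi2 G t.
      rewrite Exp_sum (eq_bigr (fun _ => Inf pi2 G t)); last by move=> b _; exact: ExpG2.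
      by rewrite sumr_const card_ord mulr_natl.
    rewrite Exp_add !Exp_scale s1 s2.
    set a1 := Inf pi1 F t; set a2 := Inf pi2 G t; set kk := (k%:R : R).
    ring.
  apply: ler_sum => c _; apply: ler_wpM2l => //.
  have e : (SDt t c + SEt t c) ^+ 2 = 2 * SDt t c ^+ 2 + 2 * SEt t c ^+ 2 - (SDt t c - SEt t c) ^+ 2.
    by ring.
  rewrite e; have := qF c; have := qG c; have := sqr_ge0 (SDt t c - SEt t c).
  set x1 := SDt t c ^+ 2; set x2 := SEt t c ^+ 2; set x3 := (_ - _) ^+ 2.
  set y1 := k%:R * _; set y2 := k%:R * _.
  rewrite -!mulrA -/y1 -/y2; lra.
Qed.

End Global.
Section Final.
Variables (R : realType) (k L : nat) (O1 O2 : finType).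
Notation C1 := {ffun 'I_k -> O1}.
Notation C2 := {ffun 'I_k -> O2}.
Notation W := (C1 * C2)%type.
Notation Cfg := {ffun 'I_L -> W}.
Variables (mu : W -> R) (pi1 : O1 -> R) (pi2 : O2 -> R).
Hypotheses (hmu : is_distr mu) (hpp : pairwise_product mu)
  (hp1 : is_distr pi1) (hp2 : is_distr pi2)
  (hc1 : coord_marg1 mu pi1) (hc2 : coord_marg2 mu pi2).

Definition pr (w : W) : R := marg1 mu w.1 * marg2 mu w.2.

Lemma sum_pair (h : W -> R) : \sum_(w : W) h w = \sum_(x : C1) \sum_(y : C2) h (x, y).
Proof. by rewrite pair_bigA; apply: eq_bigr => -[x y]. Qed.

Lemma marg1_ge0 x : 0 <= marg1 mu x.
Proof. by apply: sumr_ge0 => y _; case: hmu => p _; apply: p. Qed.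
Lemma marg2_ge0 y : 0 <= marg2 mu y.
Proof. by apply: sumr_ge0 => x _; case: hmu => p _; apply: p. Qed.

Lemma sum_marg1 : \sum_x marg1 mu x = 1.
Proof. by case: hmu => _ <-; rewrite sum_pair. Qed.
Lemma sum_marg2 : \sum_y marg2 mu y = 1.
Proof. by case: hmu => _ <-; rewrite sum_pair exchange_big. Qed.

Lemma mu_good : goodc pi1 pi2 mu.
Proof.
split; first by case: hmu.
by move=> a b u v; rewrite hpp hc1 hc2.
Qed.

Lemma pr_good : goodc pi1 pi2 pr.
Proof.
split; first by move=> w; apply: mulr_ge0; [apply: marg1_ge0 | apply: marg2_ge0].
move=> a b u v.
have e1 : \sum_(x : C1 | x a == u) marg1 mu x = pi1 u.
  rewrite -(hc1 a u) /marg1 pair_big_dep /=.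
  apply: eq_big; first by move=> [x y] /=; rewrite andbT.
  by move=> [x y].
have e2 : \sum_(y : C2 | y b == v) marg2 mu y = pi2 v.
  rewrite -(hc2 b v) /marg2 exchange_big pair_big_dep /=.
  apply: eq_big; first by move=> [x y].
  by move=> [x y].
rewrite -e1 -e2 mulr_suml.
rewrite (eq_bigr (fun x => \sum_(y : C2 | y b == v) marg1 mu x * marg2 mu y)); last first.
  by move=> x _; rewrite mulr_sumr.
by rewrite pair_big_dep.
Qed.

Lemma marg_eq1 (phi : C1 -> R) : \sum_w mu w * phi w.1 = \sum_w pr w * phi w.1.
Proof.
rewrite !sum_pair; apply: eq_bigr => x _ /=.
rewrite [in RHS](eq_bigr (fun y => marg2 mu y * (marg1 mu x * phi x))); last by move=> y _; rewrite /pr /=; ring.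
by rewrite -!mulr_suml sum_marg2 mul1r.
Qed.

Lemma marg_eq2 (phi : C2 -> R) : \sum_w mu w * phi w.2 = \sum_w pr w * phi w.2.
Proof.
rewrite !sum_pair exchange_big [in RHS]exchange_big; apply: eq_bigr => y _ /=.
rewrite [in RHS](eq_bigr (fun x => marg1 mu x * (marg2 mu y * phi y))); last by move=> x _; rewrite /pr /=; ring.
by rewrite -!mulr_suml sum_marg1 mul1r.
Qed.


Definition hyb (t : nat) (i : 'I_L) : W -> R := if (t <= i)%N then mu else pr.

Lemma hyb_good t i : goodc pi1 pi2 (hyb t i).
Proof. rewrite /hyb; case: ifP => _; [exact: mu_good | exact: pr_good]. Qed.

Variables (F : {ffun 'I_L -> O1} -> R) (G : {ffun 'I_L -> O2} -> R).
Hypotheses (hF : forall x, `|F x| <= 1) (hG : forall y, `|G y| <= 1).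

Lemma Ejoint_eq : E_joint mu F G = Exp (hyb 0) (Hc F G).
Proof. by apply: eq_bigr => c _. Qed.

Definition zipc (p : {ffun 'I_L -> C1} * {ffun 'I_L -> C2}) : Cfg := [ffun i => (p.1 i, p.2 i)].
Definition unzipc (c : Cfg) : {ffun 'I_L -> C1} * {ffun 'I_L -> C2} :=
  ([ffun i => (c i).1], [ffun i => (c i).2]).

Lemma E12_eq : E_1 mu F * E_2 mu G = Exp (hyb L) (Hc F G).
Proof.
have bij : bijective zipc.
  exists unzipc.
    by move=> [X Y]; rewrite /unzipc /zipc; congr (_, _); apply/ffunP => i; rewrite !ffunE.
  by move=> c; apply/ffunP => i; rewrite !ffunE /=; case: (c i).
rewrite /E_1 /E_2 mulr_suml.
rewrite (eq_bigr (fun X : {ffun 'I_L -> C1} => \sum_(Y : {ffun 'I_L -> C2})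
  ((\prod_(i < L) marg1 mu (X i)) * \prod_(j < k) F (rowX X j)) *
  ((\prod_(i < L) marg2 mu (Y i)) * \prod_(j < k) G (rowY Y j)))); last first.
  by move=> X _; rewrite mulr_sumr.
rewrite pair_bigA /Exp (reindex zipc (onW_bij _ bij)) /=.
apply: eq_bigr => -[X Y] _ /=.
have hL : forall i : 'I_L, hyb L i = pr by move=> i; rewrite /hyb leqNgt ltn_ord.
rewrite [in RHS](eq_bigr (fun i => marg1 mu (X i) * marg2 mu (Y i))); last first.
  by move=> i _; rewrite hL /pr !ffunE.
rewrite big_split /= /Hc big_split /=.
rewrite [in RHS](eq_bigr (fun j => F (rowX X j))); last by move=> j _; congr F; apply/ffunP => i; rewrite !ffunE.
rewrite [X in _ = _ * (_ * X)](eq_bigr (fun j => G (rowY Y j))); last by move=> j _; congr G; apply/ffunP => i; rewrite !ffunE.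
ring.
Qed.


Lemma telescope_E : E_joint mu F G - E_1 mu F * E_2 mu G =
  \sum_(t < L) (Exp (hyb t) (Hc F G) - Exp (hyb t.+1) (Hc F G)).
Proof.
rewrite Ejoint_eq E12_eq -(big_mkord xpredT (fun t => Exp (hyb t) (Hc F G) - Exp (hyb t.+1) (Hc F G))).
rewrite -opprB -(telescope_sumr (fun t => Exp (hyb t) (Hc F G)) (leq0n L)) -sumrN.
by apply: eq_bigr => t _; rewrite opprB.
Qed.

Definition Bt (t : 'I_L) := Num.sqrt (k%:R ^+ 4 * (Inf pi1 F t * Inf pi2 G t)) *
  Num.sqrt (2 * k%:R ^+ 2 * (Inf pi1 F t + Inf pi2 G t)).

Lemma step_t (t : 'I_L) (w0 : W) :
  `|Exp (hyb t) (Hc F G) - Exp (hyb t.+1) (Hc F G)| <= 2 * Bt t.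
Proof.
have hg := hyb_good.
have he : forall i : 'I_L, i != t -> hyb t i = hyb t.+1 i.
  move=> i hi; rewrite /hyb ltn_neqAle.
  have -> : (t != i :> nat) = true by rewrite eq_sym; exact: hi.
  by [].
have ht : hyb t t = mu by rewrite /hyb leqnn.
have ht' : hyb t.+1 t = pr by rewrite /hyb ltnn.
apply: le_trans (step hp1 hp2 hF hG w0 he (good_pos (hg t)) (hg t t) (hg t.+1 t) _ _) _.
- by rewrite ht ht'; exact: marg_eq1.
- by rewrite ht ht'; exact: marg_eq2.
have := Exp_St hp1 hp2 F G t (hg t); have := Exp_St hp1 hp2 F G t (hg t.+1).
rewrite -/(Bt t); lra.
Qed.


Lemma main_bound :
  `|E_joint mu F G - E_1 mu F * E_2 mu G| <=
   (4 * k ^ 3)%:R * Num.max (Num.sqrt (\sum_(i < L) Inf pi1 F i))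
                         (Num.sqrt (\sum_(i < L) Inf pi2 G i)) *
   Num.sqrt (\sum_(i < L) Inf pi1 F i * Inf pi2 G i).
Proof.
have [w0 _ | H] := pickP (fun _ : W => true); last first.
  case: hmu => _; rewrite big_pred0 // => /eqP; by rewrite eq_sym oner_eq0.
set A := \sum_(i < L) Inf pi1 F i; set B := \sum_(i < L) Inf pi2 G i.
set Gam := Num.max _ _.
have iF : forall t, 0 <= Inf pi1 F t by move=> t; apply: Inf_ge0.
have iG : forall t, 0 <= Inf pi2 G t by move=> t; apply: Inf_ge0.
have k0 : 0 <= (k%:R : R) by rewrite ler0n.
have eB : forall t, Bt t = k%:R ^+ 3 * (Num.sqrt (Inf pi1 F t * Inf pi2 G t) *
                                     Num.sqrt (2 * (Inf pi1 F t + Inf pi2 G t))).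
  move=> t; rewrite /Bt (sqrtrM _ (exprn_ge0 4 k0)).
  have -> : 2 * k%:R ^+ 2 * (Inf pi1 F t + Inf pi2 G t) =
     k%:R ^+ 2 * (2 * (Inf pi1 F t + Inf pi2 G t)) by ring.
  rewrite (sqrtrM _ (exprn_ge0 2 k0)).
  have -> : (k%:R : R) ^+ 4 = (k%:R ^+ 2) ^+ 2 by rewrite -exprM.
  rewrite !sqrtr_sqr !ger0_norm ?exprn_ge0 //; ring.
rewrite telescope_E; apply: le_trans (ler_norm_sum _ _ _) _.
apply: le_trans (ler_sum _ (fun t _ => step_t t w0)) _.
rewrite (eq_bigr (fun t => (2 * k%:R ^+ 3) * (1 * Num.sqrt (Inf pi1 F t * Inf pi2 G t) *
                                     Num.sqrt (2 * (Inf pi1 F t + Inf pi2 G t))))); last first.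
  by move=> t _; rewrite eB; ring.
rewrite -mulr_sumr.
have cs := @cs_sqrt _ _ (fun _ : 'I_L => 1) (fun t => Num.sqrt (Inf pi1 F t * Inf pi2 G t))
   (fun t => Num.sqrt (2 * (Inf pi1 F t + Inf pi2 G t))) (fun _ => ler01).
rewrite [X in _ <= Num.sqrt X * _](eq_bigr (fun t => Inf pi1 F t * Inf pi2 G t)) in cs; last first.
  by move=> t _; rewrite /= mul1r sqr_sqrtr // mulr_ge0.
rewrite [X in _ <= _ * Num.sqrt X](eq_bigr (fun t => 2 * (Inf pi1 F t + Inf pi2 G t))) in cs; last first.
  by move=> t _; rewrite /= mul1r sqr_sqrtr // mulr_ge0 ?addr_ge0.
set tau := Num.sqrt (\sum_(i < L) Inf pi1 F i * Inf pi2 G i) in cs *.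
have t0 : 0 <= tau by apply: sqrtr_ge0.
have A0 : 0 <= A by apply: sumr_ge0.
have B0 : 0 <= B by apply: sumr_ge0.
have g1 : Num.sqrt A <= Gam by rewrite le_max lexx.
have g2 : Num.sqrt B <= Gam by rewrite le_max lexx orbT.
have G0 : 0 <= Gam by apply: le_trans g1; apply: sqrtr_ge0.
have hA : A <= Gam ^+ 2.
  rewrite -(sqr_sqrtr A0); have := sqrtr_ge0 A; nra.
have hB : B <= Gam ^+ 2.
  rewrite -(sqr_sqrtr B0); have := sqrtr_ge0 B; nra.
have hs : Num.sqrt (\sum_(t < L) 2 * (Inf pi1 F t + Inf pi2 G t)) <= 2 * Gam.
  rewrite -(ger0_norm (_ : 0 <= 2 * Gam)); last by rewrite mulr_ge0.
  rewrite -sqrtr_sqr; apply: ler_wsqrtr.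
  rewrite -mulr_sumr big_split /= -/A -/B; nra.
have s0 : 0 <= Num.sqrt (\sum_(t < L) 2 * (Inf pi1 F t + Inf pi2 G t)) by apply: sqrtr_ge0.
have c0 : 0 <= 2 * (k%:R : R) ^+ 3 by rewrite mulr_ge0 ?exprn_ge0.
apply: le_trans (ler_wpM2l c0 cs) _.
rewrite natrM natrX.
have : tau * Num.sqrt (\sum_(t < L) 2 * (Inf pi1 F t + Inf pi2 G t)) <= tau * (2 * Gam).
  by apply: ler_wpM2l.
have := exprn_ge0 3 k0.
set K3 := (k%:R : R) ^+ 3; set S2 := Num.sqrt _.
nra.
Qed.

End Final.

Lemma nat_bound k : (4 * k ^ 3 <= 2 ^ (5 * k))%N.
Proof.
case: k => [|n]; first by [].
have -> : (5 * n.+1 = 2 * n.+1 + n.+1 * 3)%N by rewrite (mulnC n.+1 3) -mulnDl.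
rewrite expnD !expnM; apply: leq_mul.
  by rewrite expnS leq_pmulr // expn_gt0.
by rewrite leq_exp2r // ltnW // ltn_expl.
Qed.

Theorem theorem2p8 :
  exists C : nat,
  forall (R : realType) (k L : nat) (O1 O2 : finType)
    (mu : {ffun 'I_k -> O1} * {ffun 'I_k -> O2} -> R)
    (pi1 : O1 -> R) (pi2 : O2 -> R)
    (F : {ffun 'I_L -> O1} -> R) (G : {ffun 'I_L -> O2} -> R),
    is_distr mu ->
    pairwise_product mu ->
    is_distr pi1 -> is_distr pi2 ->
    coord_marg1 mu pi1 -> coord_marg2 mu pi2 ->
    (forall x, `|F x| <= 1) -> (forall y, `|G y| <= 1) ->
    let tau := Num.sqrt (\sum_(i < L) Inf pi1 F i * Inf pi2 G i) in
    let Gamma := Num.max (Num.sqrt (\sum_(i < L) Inf pi1 F i))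
                         (Num.sqrt (\sum_(i < L) Inf pi2 G i)) in
    `|E_joint mu F G - E_1 mu F * E_2 mu G| <=
      (2 ^ (C * k))%:R * Gamma * tau.
Proof.
exists 5%N => R k L O1 O2 mu pi1 pi2 F G hmu hpp hp1 hp2 hc1 hc2 hF hG.
cbv zeta.
apply: le_trans (main_bound hmu hpp hp1 hp2 hc1 hc2 hF hG) _.
set tau := Num.sqrt (\sum_(i < L) Inf pi1 F i * Inf pi2 G i).
set Gamma := Num.max _ _.
have t0 : 0 <= tau by apply: sqrtr_ge0.
have G0 : 0 <= Gamma.
  apply: le_trans (sqrtr_ge0 (\sum_(i < L) Inf pi1 F i)) _; by rewrite le_max lexx.
apply: ler_wpM2r => //; apply: ler_wpM2r => //.
by rewrite ler_nat nat_bound.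
Qed.
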